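(* Let $d\le p$ be positive integers, $\mathcal{U}\subset\mathbb{R}^p$ a nonempty closed convex cone, $G$ a real $d\times p$ matrix with $\{Gu:u\in\mathcal{U}\}=\mathbb{R}^d$, and $\kappa\in\mathbb{R}^p$. Let $\mathcal{U}_1=\{u\in\mathcal{U}:|Gu|=1\}$ and $\mathcal{H}(q)=\sup_{u\in\mathcal{U}_1}\{-Gu\cdot q-\kappa\cdot u\}\in(-\infty,\infty]$ for $q\in\mathbb{R}^d$. The following are equivalent: (i) $\mathcal{H}(0)<\infty$; (ii) $\mathcal{H}(q)<\infty$ for some $q\in\mathbb{R}^d$; (iii) $\mathcal{H}(q)<\infty$ for all $q\in\mathbb{R}^d$; (iv) there exists $c_1\in(0,\infty)$ such that $(\kappa\cdot u)^-\le c_1|Gu|$ for all $u\in\mathcal{U}$; (v) the set $\{u\in\mathcal{U}:|Gu|\le\varepsilon,\ \kappa\cdot u\le-1\}$ is empty for all $\varepsilon>0$ sufficiently small.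
   Context: $|\cdot|$ is the Euclidean norm and $x^-=\max(-x,0)$. *)

(* Defs.v *)
From HB Require Import structures.
From mathcomp Require Import all_boot all_order all_algebra.
From mathcomp Require Import all_classical all_reals all_analysis.
Set Implicit Arguments. Unset Strict Implicit. Unset Printing Implicit Defensive.
Import Order.TTheory GRing.Theory Num.Theory.
Import numFieldNormedType.Exports.
Local Open Scope classical_set_scope.
Local Open Scope ring_scope.

Definition dotv (R : realType) (n : nat) (x y : 'cV[R]_n) : R :=
  \sum_(i < n) x i 0 * y i 0.

Definition enorm (R : realType) (n : nat) (x : 'cV[R]_n) : R :=
  Num.sqrt (\sum_(i < n) (x i 0) ^+ 2).

Definition negpart (R : realType) (x : R) : R := Num.max (- x) 0.

Definition closed_convex_cone (R : realType) (p : nat) (U : set 'cV[R]_p) : Prop :=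
  [/\ U !=set0, closed U,
      (forall u v, U u -> U v -> forall t : R, 0 <= t <= 1 ->
          U (t *: u + (1 - t) *: v))
    & (forall u, U u -> forall t : R, 0 <= t -> U (t *: u))].

Definition U1 (R : realType) (d p : nat) (U : set 'cV[R]_p) (G : 'M[R]_(d, p))
  : set 'cV[R]_p := [set u | U u /\ enorm (G *m u) = 1].

Definition Ham (R : realType) (d p : nat) (U : set 'cV[R]_p) (G : 'M[R]_(d, p))
  (kappa : 'cV[R]_p) (q : 'cV[R]_d) : \bar R :=
  ereal_sup [set (- dotv (G *m u) q - dotv kappa u)%:E | u in U1 U G].

(* Main.v *)
Require Import Defs.
From HB Require Import structures.
From mathcomp Require Import all_boot all_order all_algebra.
From mathcomp Require Import all_classical all_reals all_analysis.
From mathcomp Require Import ring lra.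
Import Order.TTheory GRing.Theory Num.Theory.
Import numFieldNormedType.Exports.
Local Open Scope classical_set_scope.
Local Open Scope ring_scope.

Set Implicit Arguments.
Section H.
Context {R : realType}.

Definition sqn {n} (x : 'cV[R]_n) := \sum_(i < n) (x i 0) ^+ 2.

Lemma sqn_ge0 n (x : 'cV[R]_n) : 0 <= sqn x.
Proof. by apply: sumr_ge0 => i _; rewrite sqr_ge0. Qed.

Lemma dotvDr n (x y z : 'cV[R]_n) : dotv x (y + z) = dotv x y + dotv x z.
Proof. by rewrite /dotv -big_split; apply: eq_bigr => i _; rewrite !mxE mulrDr. Qed.

Lemma dotvBr n (x y z : 'cV[R]_n) : dotv x (y - z) = dotv x y - dotv x z.
Proof. by rewrite /dotv -sumrB; apply: eq_bigr => i _; rewrite !mxE mulrBr. Qed.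

Lemma dotvZr n (x y : 'cV[R]_n) a : dotv x (a *: y) = a * dotv x y.
Proof. by rewrite /dotv mulr_sumr; apply: eq_bigr => i _; rewrite !mxE mulrCA. Qed.

Lemma dotv0r n (x : 'cV[R]_n) : dotv x 0 = 0.
Proof. by rewrite /dotv big1 // => i _; rewrite !mxE mulr0. Qed.

Lemma sqnZ n (x : 'cV[R]_n) a : sqn (a *: x) = a ^+ 2 * sqn x.
Proof. by rewrite /sqn mulr_sumr; apply: eq_bigr => i _; rewrite !mxE exprMn. Qed.

Lemma enormZ n (x : 'cV[R]_n) a : enorm (a *: x) = `|a| * enorm x.
Proof.
rewrite /enorm -/(sqn _) -/(sqn x) sqnZ sqrtrM ?sqr_ge0 //.
by rewrite sqrtr_sqr.
Qed.

Lemma enorm_ge0 n (x : 'cV[R]_n) : 0 <= enorm x.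
Proof. exact: sqrtr_ge0. Qed.

Lemma enorm1 n (x : 'cV[R]_n) : enorm x = 1 -> sqn x = 1.
Proof.
move=> h; have := sqr_sqrtr (sqn_ge0 x).
by rewrite /enorm -/(sqn x) in h; rewrite h expr1n => <-.
Qed.

Lemma enorm0 n (x : 'cV[R]_n) : enorm x = 0 -> x = 0.
Proof.
move=> /eqP; rewrite /enorm sqrtr_eq0 => h.
have h0 : \sum_(i < n) x i 0 ^+ 2 = 0.
  by apply/eqP; rewrite eq_le h /=; exact: (sqn_ge0 x).
move/eqP: h0; rewrite psumr_eq0 => [/allP hall|i _]; last exact: sqr_ge0.
apply/matrixP => i j; rewrite (ord1 j) mxE.
by have := hall i (mem_index_enum _); rewrite /= sqrf_eq0 => /eqP.
Qed.

Lemma dot_le n (x y : 'cV[R]_n) : 2 * dotv x y <= sqn x + sqn y.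
Proof.
rewrite /dotv /sqn mulr_sumr -big_split /=; apply: ler_sum => i _.
have := sqr_ge0 (x i 0 - y i 0); lra.
Qed.

End H.

Local Open Scope ereal_scope.
Lemma ham_bound (R : realType) (d p : nat) (U : set 'cV[R]_p)
  (G : 'M[R]_(d, p)) (kappa : 'cV[R]_p) q :
  Ham U G kappa q < +oo -> exists M : R, forall u, U1 U G u ->
    (- dotv (G *m u) q - dotv kappa u <= M)%R.
Proof.
move=> h.
have ub u : U1 U G u -> (- dotv (G *m u) q - dotv kappa u)%:E <= Ham U G kappa q.
  by move=> hu; apply: ereal_sup_ubound; exists u.
move: h ub; case: (Ham U G kappa q) => [r| |] h ub.
- by exists r => u /ub; rewrite lee_fin.
- by rewrite ltxx in h.
- by exists 0%R => u /ub; rewrite leeNy_eq.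
Qed.

Lemma ham_fin (R : realType) (d p : nat) (U : set 'cV[R]_p)
  (G : 'M[R]_(d, p)) (kappa : 'cV[R]_p) q (M : R) :
  (forall u, U1 U G u -> (- dotv (G *m u) q - dotv kappa u <= M)%R) ->
  Ham U G kappa q < +oo.
Proof.
move=> hM; apply: (@le_lt_trans _ _ M%:E); last exact: ltry.
by apply: ge_ereal_sup => _ [u hu <-]; rewrite lee_fin; apply: hM.
Qed.
Local Close Scope ereal_scope.

Theorem lemmaA1 (R : realType) (d p : nat) (U : set 'cV[R]_p)
  (G : 'M[R]_(d, p)) (kappa : 'cV[R]_p) :
  (0 < d)%N -> (d <= p)%N ->
  closed_convex_cone U ->
  [set G *m u | u in U] = setT ->
  [<-> (Ham U G kappa 0 < +oo)%E;
       exists q : 'cV[R]_d, (Ham U G kappa q < +oo)%E;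
       forall q : 'cV[R]_d, (Ham U G kappa q < +oo)%E;
       exists c1 : R, 0 < c1 /\
         forall u, U u -> negpart (dotv kappa u) <= c1 * enorm (G *m u);
       exists eps0 : R, 0 < eps0 /\
         forall eps : R, 0 < eps -> eps <= eps0 ->
           [set u | U u /\ enorm (G *m u) <= eps /\ dotv kappa u <= -1] = set0].
Proof.
move=> d0 dp [ne cl conv cone] surj.
have addU u v : U u -> U v -> U (u + v).
  move=> hu hv; have h2 : (1 - 2^-1 : R) = 2^-1 by field.
  have hc : U (2^-1 *: u + (1 - 2^-1) *: v).
    apply: conv => //; apply/andP; split; first by rewrite invr_ge0 ler0n.
    by rewrite invf_le1 ?ler1n // ltr0n.
  rewrite h2 in hc; have := cone _ hc 2 (ler0n _ 2).
  by rewrite -scalerDr scalerA divff ?pnatr_eq0 // scale1r.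
pose w : 'cV[R]_d := const_mx 1.
have wpos : 0 < enorm w.
  rewrite /enorm sqrtr_gt0; under eq_bigr do rewrite mxE expr1n.
  by rewrite sumr_const card_ord ltr0n.
have : setT w by [].
rewrite -surj => -[u0 hu0 hGu0].
pose v0 := (enorm w)^-1 *: u0.
have hv0 : U1 U G v0.
  split; first by apply: cone => //; rewrite invr_ge0 ltW.
  rewrite -scalemxAr hGu0 enormZ ger0_norm ?invr_ge0 ?ltW //.
  by rewrite mulVf // gt_eqF.
clearbody v0.
tfae.
- by move=> h; exists 0.
- move=> [q /ham_bound [M hM]] q'.
  apply: (@ham_fin R d p U G kappa q' (M + (1 + @sqn R d (q - q')) / 2)) => u hu.
  have := dot_le (G *m u) (q - q'); rewrite dotvBr (enorm1 _ hu.2).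
  have := hM u hu; lra.
- move=> /(_ 0) /ham_bound [M hM].
  pose m := Num.max M 0.
  have Mm : M <= m by rewrite le_max lexx.
  have m0 : 0 <= m by rewrite le_max lexx orbT.
  exists (m + 1); split; first lra.
  move=> u hu.
  have := enorm_ge0 (G *m u); rewrite le0r => /orP[/eqP n0|npos].
  + have Gu0 := enorm0 _ n0.
    rewrite n0 mulr0 /negpart ge_max lexx andbT oppr_le0.
    rewrite leNgt; apply/negP => kneg.
    pose t := (`|M + dotv kappa v0| + 1) / (- dotv kappa u).
    have ht : U1 U G (v0 + t *: u).
      split.
        apply: addU; first exact: hv0.1.
        apply: cone => //; apply: divr_ge0; last lra.
        have := normr_ge0 (M + dotv kappa v0); lra.
      by rewrite mulmxDr -(scalemxAr t) Gu0 scaler0 addr0; exact: hv0.2.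
    have := hM _ ht; rewrite dotv0r dotvDr dotvZr.
    have -> : t * dotv kappa u = - (`|M + dotv kappa v0| + 1).
      rewrite /t; field; rewrite ?oppr_eq0 lt_eqF //.
    have := ler_norm (M + dotv kappa v0); lra.
  + set n := enorm (G *m u) in npos *.
    have hv : U1 U G (n^-1 *: u).
      split; first by apply: cone => //; rewrite invr_ge0 ltW.
      rewrite -scalemxAr enormZ ger0_norm ?invr_ge0 ?ltW // -/n.
      by rewrite mulVf // gt_eqF.
    have := hM _ hv; rewrite dotv0r dotvZr.
    have e : dotv kappa u = n * (n^-1 * dotv kappa u).
      by rewrite mulrA mulfV ?mul1r // gt_eqF.
    move: (n^-1 * dotv kappa u) e => k e hk.
    rewrite /negpart ge_max e; apply/andP; split; nra.
- move=> [c [c0 hc]]; exists (2 * c)^-1; split.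
    by rewrite invr_gt0; lra.
  move=> e e0 ele; apply/seteqP; split => // u [hu [hn hk]].
  have := hc u hu.
  have h1 : 1 <= negpart (dotv kappa u) by rewrite /negpart le_max; apply/orP; left; lra.
  have h2 : c * (2 * c)^-1 = 2^-1.
    by rewrite invfM mulrCA mulfV ?mulr1 // gt_eqF.
  have h3 : c * enorm (G *m u) <= c * e by rewrite ler_wpM2l // ltW.
  have h4 : c * e <= c * (2 * c)^-1 by rewrite ler_wpM2l // ltW.
  move=> h5; suff : False by []; clear -h1 h2 h3 h4 h5; lra.
- move=> [e0 [he0 h]].
  apply: (@ham_fin R d p U G kappa 0 e0^-1) => u hu.
  rewrite dotv0r; rewrite leNgt; apply/negP => hlt.
  have ie0 : 0 < e0^-1 by rewrite invr_gt0.
  set k := dotv kappa u in hlt.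
  have kneg : k < 0 by lra.
  pose t := (- k)^-1.
  have tk : t * (- k) = 1 by rewrite mulVf // lt0r_neq0 // oppr_gt0.
  have tpos : 0 < t by rewrite invr_gt0 oppr_gt0.
  have ee : e0^-1 * e0 = 1 by rewrite mulVf // gt_eqF.
  have tle : t <= e0.
    have h1 : 1 < - k * e0 by nra.
    nra.
  have := h e0 he0 (lexx _).
  move=> /seteqP [/(_ (t *: u)) hsub _].
  apply: hsub; split; first by apply: cone; [exact: hu.1 | exact: ltW].
  split.
    by rewrite -scalemxAr enormZ hu.2 mulr1 ger0_norm // ltW.
  rewrite dotvZr -/k; nra.
Qed.
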